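(* For every $n\in\mathbb{N}$, the operator $W_n$ on $H^2$ is not Li-Yorke chaotic.
   Context: $H^2$ denotes the Hardy space of analytic functions $f(z)=\sum_{k\ge0}\hat f(k)z^k$ on the open unit disk with $\sum_{k}|\hat f(k)|^2<\infty$. For $n\in\mathbb{N}$, $W_n$ is the bounded operator on $H^2$ given by $W_nf(z)=(1+z+\cdots+z^{n-1})f(z^n)$ (so $W_1$ is the identity and $W_mW_n=W_{mn}$). An operator $T$ on a Banach space $Y$ is Li-Yorke chaotic if there is an uncountable set $S\subseteq Y$ such that for all distinct $x,y\in S$, $\liminf_{k\to\infty}\|T^kx-T^ky\|=0$ and $\limsup_{k\to\infty}\|T^kx-T^ky\|=\infty$. *)

(* Defs.v *)
From Stdlib Require Import Reals List Arith.
From Coquelicot Require Import Coquelicot.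
Open Scope R_scope.

(* An element f of H^2 is identified with its Taylor coefficient sequence
   (fhat(k))_k; H^2 is the set of square-summable coefficient sequences. *)
Definition in_H2 (a : nat -> C) : Prop :=
  ex_series (fun k => (Cmod (a k)) ^ 2).

Definition H2norm (a : nat -> C) : R :=
  sqrt (Series (fun k => (Cmod (a k)) ^ 2)).

(* Coefficients of f(z^n): coefficient of z^m is fhat(m/n) if n | m, else 0. *)
Definition comp_zn (n : nat) (a : nat -> C) : nat -> C :=
  fun m => if Nat.eqb (Nat.modulo m n) 0%nat then a (Nat.div m n) else 0%C.

(* Coefficients of W_n f = (1 + z + ... + z^(n-1)) f(z^n)  (Cauchy product):
   coefficient of z^m is  sum_{j<n, j<=m} [z^(m-j)] f(z^n). *)
Definition W (n : nat) (a : nat -> C) : nat -> C :=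
  fun m => fold_right Cplus 0%C
             (map (fun j => if Nat.leb j m then comp_zn n a (Nat.sub m j) else 0%C)
                  (seq 0%nat n)).

Definition uncountable {X : Type} (S : X -> Prop) : Prop :=
  ~ exists f : X -> nat, forall x y, S x -> S y -> f x = f y -> x = y.

Definition LiYorke_chaotic (T : (nat -> C) -> (nat -> C)) : Prop :=
  exists S : (nat -> C) -> Prop,
    (forall x, S x -> in_H2 x) /\
    uncountable S /\
    (forall x y, S x -> S y -> x <> y ->
       LimInf_seq (fun k => H2norm (fun m => Cminus (Nat.iter k T x m)
                                                    (Nat.iter k T y m)))
         = Finite 0 /\
       LimSup_seq (fun k => H2norm (fun m => Cminus (Nat.iter k T x m)
                                                    (Nat.iter k T y m)))
         = p_infty).

(* Main.v *)
Require Import Defs.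
From Stdlib Require Import Reals List Arith.
From Coquelicot Require Import Coquelicot.
From Stdlib Require Import Lia Lra Psatz Classical.

Open Scope R_scope.

Fixpoint psum (f : nat -> R) (N : nat) : R :=
  match N with O => 0 | S k => psum f k + f k end.

Lemma sum_psum f N : sum_f_R0 f N = psum f (S N).
Proof. induction N; simpl in *. ring. rewrite IHN. ring. Qed.

Lemma psum_add f a k : psum f (a + k) = psum f a + psum (fun i => f (a + i)%nat) k.
Proof.
  induction k; simpl. rewrite Nat.add_0_r. ring.
  rewrite Nat.add_succ_r. simpl. rewrite IHk. ring.
Qed.

Lemma psum_const r k : psum (fun _ => r) k = INR k * r.
Proof. induction k; simpl psum. simpl; ring. rewrite IHk, S_INR. ring. Qed.

Lemma psum_ext f g k : (forall i, (i < k)%nat -> f i = g i) -> psum f k = psum g k.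
Proof.
  induction k; intros H; simpl. reflexivity.
  rewrite IHk, H. reflexivity. lia. intros; apply H; lia.
Qed.

Lemma psum_nonneg f k : (forall i, 0 <= f i) -> 0 <= psum f k.
Proof. intros H; induction k; simpl. lra. specialize (H k). lra. Qed.

Lemma psum_mono f a b : (forall i, 0 <= f i) -> (a <= b)%nat -> psum f a <= psum f b.
Proof.
  intros H Hab. replace b with (a + (b - a))%nat by lia.
  rewrite psum_add. pose proof (psum_nonneg (fun i => f (a + i)%nat) (b - a) (fun i => H _)). lra.
Qed.

Lemma psum_block n b N : (0 < n)%nat ->
  psum (fun m => b (m / n)%nat) (n * N) = INR n * psum b N.
Proof.
  intros hn. induction N.
  - rewrite Nat.mul_0_r. simpl. ring.
  - rewrite Nat.mul_succ_r, psum_add, IHN.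
    rewrite (psum_ext (fun i => b ((n * N + i) / n)%nat) (fun _ => b N)).
    + rewrite psum_const. change (psum b (Datatypes.S N)) with (psum b N + b N). ring.
    + intros i Hi. f_equal. rewrite (Nat.mul_comm n N).
      rewrite Nat.div_add_l by lia. rewrite Nat.div_small by lia. lia.
Qed.

Lemma series_div n b : (0 < n)%nat -> (forall m, 0 <= b m) -> ex_series b ->
  ex_series (fun m => b (m / n)%nat) /\ Series b <= Series (fun m => b (m / n)%nat).
Proof.
  intros hn hb Hb.
  set (c := fun m => b (m / n)%nat).
  assert (hc : forall m, 0 <= c m) by (intros; apply hb).
  destruct (ex_series_Reals_0 b Hb) as [s Hs].
  assert (Sb : Series b = s) by (apply is_series_unique; apply is_series_Reals; exact Hs).
  assert (Pb : forall N, psum b N <= s).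
  { intros [|N]. simpl. pose proof (sum_incr b 0 s Hs hb). simpl in H. specialize (hb 0%nat). lra.
    rewrite <- sum_psum. apply sum_incr; auto. }
  assert (Hg : Un_growing (sum_f_R0 c)).
  { intros N. simpl. specialize (hc (S N)). lra. }
  assert (Hub : has_ub (sum_f_R0 c)).
  { exists (INR n * s). intros x [i ->].
    rewrite sum_psum. apply Rle_trans with (psum c (n * S i)).
    apply psum_mono; auto. nia.
    unfold c. rewrite psum_block by auto.
    apply Rmult_le_compat_l. apply pos_INR. apply Pb. }
  destruct (growing_cv _ Hg Hub) as [l Hl].
  assert (Sc : is_series c l) by (apply is_series_Reals; exact Hl).
  split. exists l. exact Sc.
  rewrite (is_series_unique _ _ Sc), Sb.
  assert (Pc : forall M, psum c M <= l).
  { intros [|M]. simpl. pose proof (growing_ineq _ _ Hg Hl 0%nat). simpl in H.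
    specialize (hc 0%nat). lra.
    rewrite <- sum_psum. apply growing_ineq; auto. }
  apply (Rle_cv_lim (Un := sum_f_R0 b) (Vn := fun _ => l)); auto.
  - intros N. rewrite sum_psum. apply Rle_trans with (psum c (n * S N)); auto.
    unfold c. rewrite psum_block by auto.
    assert (1 <= INR n) by (apply (le_INR 1); lia).
    pose proof (psum_nonneg b (S N) hb). nra.
  - intros eps He. exists 0%nat. intros. unfold R_dist. rewrite Rminus_diag, Rabs_R0. auto.
Qed.

Lemma fold_zero (g : nat -> C) s len :
  (forall j, (s <= j < s + len)%nat -> g j = 0%C) ->
  fold_right Cplus 0%C (map g (seq s len)) = 0%C.
Proof.
  revert s; induction len; intros s H; simpl. reflexivity.
  rewrite H by lia. rewrite IHlen. apply Cplus_0_l. intros; apply H; lia.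
Qed.

Lemma fold_single (g : nat -> C) r s len :
  (s <= r < s + len)%nat ->
  (forall j, (s <= j < s + len)%nat -> j <> r -> g j = 0%C) ->
  fold_right Cplus 0%C (map g (seq s len)) = g r.
Proof.
  revert s; induction len; intros s Hr H. lia.
  simpl. destruct (Nat.eq_dec s r) as [<-|Hne].
  - rewrite fold_zero. apply Cplus_0_r. intros; apply H; lia.
  - rewrite H by lia. rewrite IHlen. apply Cplus_0_l. lia. intros; apply H; lia.
Qed.

Lemma W_spec n a m : (0 < n)%nat -> W n a m = a (m / n)%nat.
Proof.
  intros hn. unfold W.
  assert (Hdm := Nat.div_mod_eq m n).
  assert (Hmb := Nat.mod_upper_bound m n ltac:(lia)).
  rewrite (fold_single _ (m mod n) 0 n).
  - assert (Hle : (m mod n <= m)%nat) by (apply Nat.mod_le; lia).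
    apply Nat.leb_le in Hle. rewrite Hle. unfold comp_zn.
    replace (m - m mod n)%nat with (m / n * n)%nat by lia.
    rewrite Nat.mod_mul by lia. simpl. rewrite Nat.div_mul by lia. reflexivity.
  - lia.
  - intros j Hj Hjr. destruct (Nat.leb j m) eqn:E; [|reflexivity].
    apply Nat.leb_le in E. unfold comp_zn.
    destruct (Nat.eqb ((m - j) mod n) 0) eqn:E2; [|reflexivity].
    exfalso. apply Nat.eqb_eq in E2. apply Hjr.
    replace m with ((m - j) + j)%nat at 1 by lia.
    rewrite Nat.add_mod by lia. rewrite E2, Nat.add_0_l.
    rewrite (Nat.mod_small j n) by lia. rewrite (Nat.mod_small j n) by lia. reflexivity.
Qed.

Lemma W_iter n k a m : (0 < n)%nat -> Nat.iter k (W n) a m = a (m / n ^ k)%nat.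
Proof.
  intros hn. revert m. induction k; intros m.
  - cbn [Nat.iter]. rewrite Nat.pow_0_r, Nat.div_1_r. reflexivity.
  - simpl. rewrite W_spec by auto. rewrite IHk. f_equal.
    rewrite Nat.div_div by (try apply Nat.pow_nonzero; lia). reflexivity.
Qed.

Theorem mainTheorem4 : forall n : nat, (0 < n)%nat -> ~ LiYorke_chaotic (W n).
Proof.
  intros n hn [S [HH [Hunc Hly]]].
  assert (Hex : exists x y, S x /\ S y /\ x <> y).
  { apply NNPP; intro H; apply Hunc; exists (fun _ => 0%nat).
    intros x y Sx Sy _. apply NNPP; intro Hne; apply H; exists x, y; auto. }
  destruct Hex as [x [y [Sx [Sy Hne]]]].
  destruct (Hly x y Sx Sy Hne) as [Hi Hs].
  set (u := fun k => H2norm (fun m => Cminus (Nat.iter k (W n) x m) (Nat.iter k (W n) y m))).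
  set (b := fun k m => (Cmod (Cminus (x (m / n ^ k)%nat) (y (m / n ^ k)%nat))) ^ 2).
  assert (Hu : forall k, u k = sqrt (Series (b k))).
  { intros k. unfold u, H2norm. f_equal. apply Series_ext. intros m.
    unfold b. rewrite !W_iter by auto. reflexivity. }
  assert (Hb0 : forall k m, 0 <= b k m) by (intros; unfold b; apply pow2_ge_0).
  assert (Hbs : forall k m, b (Datatypes.S k) m = b k (m / n)%nat).
  { intros k m. unfold b. simpl. rewrite Nat.div_div by (try apply Nat.pow_nonzero; lia). rewrite (Nat.mul_comm n). reflexivity. }
  assert (Hex0 : ex_series (b 0%nat)).
  { apply (ex_series_le (b 0%nat) (fun m => 2 * (Cmod (x m))^2 + 2 * (Cmod (y m))^2)).
    - intros m. unfold b. rewrite Nat.pow_0_r, Nat.div_1_r.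
      change (norm ?z) with (Rabs z). rewrite Rabs_pos_eq.
      2: { pose proof (Cmod_ge_0 (Cminus (x m) (y m))). nra. }
      pose proof (Cmod_triangle (x m) (Copp (y m))). rewrite Cmod_opp in H.
      unfold Cminus. pose proof (Cmod_ge_0 (x m + - y m)%C).
      pose proof (Cmod_ge_0 (x m)). pose proof (Cmod_ge_0 (y m)). revert H H0 H1 H2. generalize (Cmod (x m + - y m)) (Cmod (x m)) (Cmod (y m)). intros p q r Ha Hb Hc Hd. assert (p*p <= (q+r)*(q+r)) by (apply Rmult_le_compat; lra). pose proof (Rle_0_sqr (q - r)). unfold Rsqr in *. simpl. lra.
    - apply (ex_series_ext (fun m => plus ((Cmod (x m))^2 * 2) ((Cmod (y m))^2 * 2))).
      intros m. unfold plus; simpl. ring.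
      apply (@ex_series_plus R_AbsRing R_NormedModule (fun m => Cmod (x m)^2 * 2) (fun m => Cmod (y m)^2*2)); apply ex_series_scal_r; apply HH; auto. }
  assert (Hexk : forall k, ex_series (b k)).
  { induction k. auto.
    apply (ex_series_ext (fun m => b k (m / n)%nat)). intros; symmetry; apply Hbs.
    apply (series_div n (b k)); auto. }
  assert (Hmono : forall k, u k <= u (Datatypes.S k)).
  { intros k. rewrite !Hu. apply sqrt_le_1_alt.
    rewrite (Series_ext (b (Datatypes.S k)) (fun m => b k (m / n)%nat)) by apply Hbs.
    apply (series_div n (b k)); auto. }
  pose proof (ex_lim_seq_incr u Hmono) as Hl.
  apply ex_lim_LimSup_LimInf_seq in Hl.
  unfold u in Hl. rewrite Hi, Hs in Hl. discriminate.
Qed.
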